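(* Let $\mathcal V$ be a subcanonical descent category, $k$ a natural number, and $f:X\to Y$ a hypercover of $k$-groupoids. Then $X_n\to\mathrm{Map}(\partial\Delta^n\hookrightarrow\Delta^n,f)$ is an isomorphism for all $n\ge k$.
   Context: A descent category is a small category $\mathcal V$ with a subcategory of morphisms called covers such that: $\mathcal V$ has finite limits; pullbacks of covers are covers; if $f$ and $g\circ f$ are covers then $g$ is a cover. It is subcanonical if every cover is an effective epimorphism (i.e. $f:X\to Y$ is the coequalizer of $X\times_YX\rightrightarrows X$). A simplicial space is a simplicial object in $\mathcal V$; $\mathrm{Map}(T,X)$ is the finite limit representing simplicial maps $T\to X$; $\mathrm{Map}(S\hookrightarrow T,f)=\mathrm{Map}(S,X)\times_{\mathrm{Map}(S,Y)}\mathrm{Map}(T,Y)$. $\Lambda^n_i=\bigcup_{j\ne i}\partial_j\Delta^n$. A $k$-groupoid is a simplicial space with $X_n\to\mathrm{Map}(\Lambda^n_i,X)$ a cover for $n>0$, $0\le i\le n$, and an isomorphism for $n>k$. A hypercover is a morphism $f$ with $X_n\to\mathrm{Map}(\partial\Delta^n\hookrightarrow\Delta^n,f)$ a cover for all $n\ge0$. *)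

(* Defs.v *)
From mathcomp Require Import all_boot.

Set Implicit Arguments.
Unset Strict Implicit.
Unset Printing Implicit Defensive.

Record Cat := {
  Ob :> Type;
  Hom : Ob -> Ob -> Type;
  comp : forall a b c : Ob, Hom b c -> Hom a b -> Hom a c;
  idm : forall a : Ob, Hom a a;
  comp_assoc : forall a b c d (h : Hom c d) (g : Hom b c) (f : Hom a b),
      comp h (comp g f) = comp (comp h g) f;
  comp_idl : forall a b (f : Hom a b), comp (idm b) f = f;
  comp_idr : forall a b (f : Hom a b), comp f (idm a) = f }.

Arguments Hom {_} _ _.
Arguments comp {_ _ _ _} _ _.
Arguments idm {_} _.

Definition is_iso (C : Cat) (a b : C) (f : Hom a b) : Prop :=
  exists g : Hom b a, comp g f = idm a /\ comp f g = idm b.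

Record FinCat := {
  Jo : finType;
  Jh : Jo -> Jo -> finType;
  jcomp : forall i j k, Jh j k -> Jh i j -> Jh i k;
  jid : forall i, Jh i i;
  jassoc : forall i j k l (w : Jh k l) (v : Jh j k) (u : Jh i j),
      jcomp w (jcomp v u) = jcomp (jcomp w v) u;
  jidl : forall i j (u : Jh i j), jcomp (jid j) u = u;
  jidr : forall i j (u : Jh i j), jcomp u (jid i) = u }.

Record Diagram (C : Cat) (J : FinCat) := {
  dob : Jo J -> C;
  dhom : forall i j, @Jh J i j -> Hom (dob i) (dob j);
  dhom_id : forall i, dhom (jid i) = idm (dob i);
  dhom_comp : forall i j k (v : @Jh J j k) (u : @Jh J i j),
      dhom (jcomp v u) = comp (dhom v) (dhom u) }.

Arguments dob {C J} _ _.
Arguments dhom {C J} _ {i j} _.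

Definition is_limit (C : Cat) (J : FinCat) (D : Diagram C J) (L : C)
    (p : forall i, Hom L (dob D i)) : Prop :=
  (forall i j (u : @Jh J i j), comp (dhom D u) (p i) = p j) /\
  (forall (Z : C) (q : forall i, Hom Z (dob D i)),
      (forall i j (u : @Jh J i j), comp (dhom D u) (q i) = q j) ->
      exists h : Hom Z L, (forall i, comp (p i) h = q i) /\
        (forall h' : Hom Z L, (forall i, comp (p i) h' = q i) -> h' = h)).

Arguments is_limit {C J} D L p.

Definition has_finite_limits (C : Cat) : Prop :=
  forall (J : FinCat) (D : Diagram C J), exists (L : C) p, is_limit D L p.

Definition is_pullback (C : Cat) (A B C0 : C) (f : Hom A C0) (g : Hom B C0)
    (P : C) (p1 : Hom P A) (p2 : Hom P B) : Prop :=
  comp f p1 = comp g p2 /\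
  (forall (Z : C) (q1 : Hom Z A) (q2 : Hom Z B), comp f q1 = comp g q2 ->
     exists h : Hom Z P, (comp p1 h = q1 /\ comp p2 h = q2) /\
       (forall h' : Hom Z P, comp p1 h' = q1 -> comp p2 h' = q2 -> h' = h)).

Record DescentCat := {
  dcat :> Cat;
  cover : forall a b : dcat, Hom a b -> Prop;
  dc_finite_limits : has_finite_limits dcat;
  cover_id : forall a : dcat, cover (idm a);
  cover_comp : forall (a b c : dcat) (g : Hom b c) (f : Hom a b),
      cover f -> cover g -> cover (comp g f);
  cover_pullback : forall (A B C0 P : dcat) (f : Hom A C0) (g : Hom B C0)
      (p1 : Hom P A) (p2 : Hom P B),
      cover f -> is_pullback f g p1 p2 -> cover p2;
  cover_2of3 : forall (a b c : dcat) (f : Hom a b) (g : Hom b c),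
      cover f -> cover (comp g f) -> cover g }.

Arguments cover {d a b} _.

Definition effective_epi (C : Cat) (X Y : C) (f : Hom X Y) : Prop :=
  forall (P : C) (p1 p2 : Hom P X), is_pullback f f p1 p2 ->
  forall (Z : C) (h : Hom X Z), comp h p1 = comp h p2 ->
    exists u : Hom Y Z, comp u f = h /\
      (forall u' : Hom Y Z, comp u' f = h -> u' = u).

Definition subcanonical (V : DescentCat) : Prop :=
  forall (X Y : V) (f : Hom X Y), cover f -> effective_epi f.

Definition monob m n (f : {ffun 'I_m.+1 -> 'I_n.+1}) : bool :=
  [forall i : 'I_m.+1, forall j : 'I_m.+1, (i <= j) ==> (f i <= f j)].

Definition dmap m n := {f : {ffun 'I_m.+1 -> 'I_n.+1} | monob f}.

Definition dfun m n (s : dmap m n) : 'I_m.+1 -> 'I_n.+1 := fun i => sval s i.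

Lemma monob_comp l m n (g : dmap m n) (f : dmap l m) :
  monob [ffun i => dfun g (dfun f i)].
Proof.
case: g => g Hg; case: f => f Hf; rewrite /dfun /=.
apply/forallP => i; apply/forallP => j; rewrite !ffunE; apply/implyP => Hij.
have Hfij : f i <= f j by move/forallP: Hf => /(_ i)/forallP/(_ j)/implyP; apply.
by move/forallP: Hg => /(_ (f i))/forallP/(_ (f j))/implyP; apply.
Qed.

Lemma monob_id n : monob [ffun i : 'I_n.+1 => i].
Proof. by apply/forallP => i; apply/forallP => j; rewrite !ffunE; apply/implyP. Qed.

Definition dcomp l m n (g : dmap m n) (f : dmap l m) : dmap l n :=
  exist (@monob l n) _ (monob_comp g f).

Definition did n : dmap n n := exist (@monob n n) _ (monob_id n).

Record SObj (C : Cat) := {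
  sob :> nat -> C;
  sact : forall m n, dmap m n -> Hom (sob n) (sob m);
  sact_id : forall n, sact (did n) = idm (sob n);
  sact_comp : forall l m n (g : dmap m n) (f : dmap l m),
      sact (dcomp g f) = comp (sact f) (sact g) }.

Record SMor (C : Cat) (X Y : SObj C) := {
  smor :> forall n, Hom (X n) (Y n);
  smor_nat : forall m n (t : dmap m n),
      comp (smor m) (sact X t) = comp (sact Y t) (smor n) }.

(* Simplicial subsets of Delta^n, described by their simplices         *)
(* (an m-simplex of Delta^n is a monotone map [m] -> [n])               *)

Definition boundary n m (s : dmap m n) : bool :=
  [exists j : 'I_n.+1, [forall i : 'I_m.+1, dfun s i != j]].

Definition horn n (k : 'I_n.+1) m (s : dmap m n) : bool :=
  [exists j : 'I_n.+1, (j != k) && [forall i : 'I_m.+1, dfun s i != j]].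

Definition fullsimplex n m (s : dmap m n) : bool := true.

Section MapDefs.
Variable C : Cat.

(* the data of a map T -> Hom(Z, X_.) : one Z-point of X_m per m-simplex of T *)
Definition sfamily (X : SObj C) n (T : forall m, dmap m n -> bool) (Z : C) :=
  forall m (s : dmap m n), T m s -> Hom Z (X m).

Definition scompatible (X : SObj C) n (T : forall m, dmap m n -> bool) (Z : C)
    (a : sfamily X T Z) : Prop :=
  forall l m (t : dmap l m) (s : dmap m n) (Hs : T m s) (Hst : T l (dcomp s t)),
    a l (dcomp s t) Hst = comp (sact X t) (a m s Hs).

(* (M, phi) represents Z |-> sSet(T, Hom(Z, X_.)), i.e. M = Map(T, X) *)
Definition is_Map (X : SObj C) n (T : forall m, dmap m n -> bool) (M : C)
    (phi : forall Z : C, Hom Z M -> sfamily X T Z) : Prop :=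
  [/\ forall Z (c : Hom Z M), scompatible (phi Z c),
      forall Z Z' (g : Hom Z' Z) (c : Hom Z M) m s H,
        phi Z' (comp c g) m s H = comp (phi Z c m s H) g,
      forall Z (a : sfamily X T Z), scompatible a ->
        exists c : Hom Z M, forall m s H, phi Z c m s H = a m s H
    & forall Z (c c' : Hom Z M),
        (forall m s H, phi Z c m s H = phi Z c' m s H) -> c = c'].

(* the canonical map X_n -> Map(T, X) (restriction along T -> Delta^n) *)
Definition canon_Map (X : SObj C) n (T : forall m, dmap m n -> bool) (M : C)
    (phi : forall Z : C, Hom Z M -> sfamily X T Z) (c : Hom (X n) M) : Prop :=
  forall m s H, phi (X n) c m s H = sact X s.

(* (M, phi, psi) represents
   Z |-> sSet(T, Hom(Z,X_.)) x_{sSet(T, Hom(Z,Y_.))} Hom(Z, Y_n),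
   i.e. M = Map(T -> Delta^n, f) = Map(T,X) x_{Map(T,Y)} Y_n *)
Definition is_MapRel (X Y : SObj C) (f : SMor X Y) n
    (T : forall m, dmap m n -> bool) (M : C)
    (phi : forall Z : C, Hom Z M -> sfamily X T Z)
    (psi : forall Z : C, Hom Z M -> Hom Z (Y n)) : Prop :=
  [/\ forall Z (c : Hom Z M), scompatible (phi Z c),
      forall Z (c : Hom Z M) m s H,
        comp (f m) (phi Z c m s H) = comp (sact Y s) (psi Z c),
      forall Z Z' (g : Hom Z' Z) (c : Hom Z M),
        (forall m s H, phi Z' (comp c g) m s H = comp (phi Z c m s H) g) /\
        psi Z' (comp c g) = comp (psi Z c) g,
      forall Z (a : sfamily X T Z) (y : Hom Z (Y n)), scompatible a ->
        (forall m s H, comp (f m) (a m s H) = comp (sact Y s) y) ->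
        exists c : Hom Z M, (forall m s H, phi Z c m s H = a m s H) /\ psi Z c = y
    & forall Z (c c' : Hom Z M),
        (forall m s H, phi Z c m s H = phi Z c' m s H) -> psi Z c = psi Z c' ->
        c = c'].

Definition canon_MapRel (X Y : SObj C) (f : SMor X Y) n
    (T : forall m, dmap m n -> bool) (M : C)
    (phi : forall Z : C, Hom Z M -> sfamily X T Z)
    (psi : forall Z : C, Hom Z M -> Hom Z (Y n)) (c : Hom (X n) M) : Prop :=
  (forall m s H, phi (X n) c m s H = sact X s) /\ psi (X n) c = f n.

End MapDefs.

Arguments sfamily {C} X {n} T Z.
Arguments scompatible {C X n T Z} a.
Arguments is_Map {C} X {n} T M phi.
Arguments canon_Map {C X n T M} phi c.
Arguments is_MapRel {C X Y} f {n} T M phi psi.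
Arguments canon_MapRel {C X Y} f {n T M} phi psi c.

Definition is_kgroupoid (V : DescentCat) (k : nat) (X : SObj V) : Prop :=
  forall n (i : 'I_n.+1), 0 < n ->
  forall (M : V) (phi : forall Z : V, Hom Z M -> sfamily X (horn i) Z),
    is_Map X (horn i) M phi ->
    forall c : Hom (X n) M, canon_Map phi c ->
      cover c /\ (k < n -> is_iso c).

Definition is_hypercover (V : DescentCat) (X Y : SObj V) (f : SMor X Y) : Prop :=
  forall n (M : V) (phi : forall Z : V, Hom Z M -> sfamily X (boundary (n:=n)) Z)
    (psi : forall Z : V, Hom Z M -> Hom Z (Y n)),
    is_MapRel f (boundary (n:=n)) M phi psi ->
    forall c : Hom (X n) M, canon_MapRel f phi psi c -> cover c.

(* Main.v *)
Require Import Defs.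
From mathcomp Require Import all_boot.
From mathcomp Require Import zify.
Import Defs.
Set Implicit Arguments.
Unset Strict Implicit.
Unset Printing Implicit Defensive.

Lemma monoP m n (F : 'I_m.+1 -> 'I_n.+1) :
  (forall i j : 'I_m.+1, i <= j -> F i <= F j) -> monob [ffun i => F i].
Proof.
move=> H; apply/forallP => i; apply/forallP => j; rewrite !ffunE.
by apply/implyP; apply: H.
Qed.

Lemma dcompE l m n (g : dmap m n) (f : dmap l m) i :
  dfun (dcomp g f) i = dfun g (dfun f i).
Proof. by rewrite /dfun /dcomp /= ffunE. Qed.

Lemma didE n i : dfun (did n) i = i.
Proof. by rewrite /dfun /did /= ffunE. Qed.

Lemma dmap_eq m n (s t : dmap m n) : (forall i, dfun s i = dfun t i) -> s = t.
Proof.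
move=> H; apply: val_inj; apply/ffunP => i; exact: H.
Qed.

Lemma dmono m n (s : dmap m n) (i j : 'I_m.+1) : i <= j -> dfun s i <= dfun s j.
Proof.
case: s => s Hs /= Hij; rewrite /dfun /=.
by move/forallP: Hs => /(_ i)/forallP/(_ j)/implyP; apply.
Qed.

Lemma lift_mono l (j : 'I_l.+2) (i k : 'I_l.+1) : i <= k -> lift j i <= lift j k.
Proof. by rewrite /= leq_bump2. Qed.

Definition delta l (j : 'I_l.+2) : dmap l l.+1 :=
  exist (@monob l l.+1) _ (@monoP l l.+1 (lift j) (@lift_mono l j)).

Definition sigf l (b : 'I_l.+2) (i : 'I_l.+2) : 'I_l.+1 :=
  inord (if i < b then (i : nat) else i.-1).

Lemma sigfE l (b i : 'I_l.+2) : (sigf b i : nat) = if i < b then (i : nat) else i.-1.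
Proof.
rewrite /sigf inordK //; case: ifP => H.
  by have := ltn_ord b; lia.
by have := ltn_ord i; lia.
Qed.

Lemma sigf_mono l (b : 'I_l.+2) (i k : 'I_l.+2) : i <= k -> sigf b i <= sigf b k.
Proof. rewrite !sigfE; (do ?case: ifP => ?); lia. Qed.

Definition sigma l (b : 'I_l.+2) : dmap l.+1 l :=
  exist (@monob l.+1 l) _ (@monoP l.+1 l (sigf b) (@sigf_mono l b)).

Lemma deltaE l (j : 'I_l.+2) i : dfun (delta j) i = lift j i.
Proof. by rewrite /dfun /= ffunE. Qed.

Lemma sigmaE l (b : 'I_l.+2) i : (dfun (sigma b) i : nat) = if i < b then (i : nat) else i.-1.
Proof. by rewrite /dfun /= ffunE sigfE. Qed.

Lemma sigma_delta l (j : 'I_l.+2) : dcomp (sigma j) (delta j) = did l.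
Proof.
apply: dmap_eq => i; apply: ord_inj; rewrite dcompE didE sigmaE deltaE /= /bump.
(do ?case: ifP => ?); lia.
Qed.

Lemma lift_sigma l (j i : 'I_l.+2) : i != j -> lift j (dfun (sigma j) i) = i.
Proof.
move=> H; apply: ord_inj; rewrite /= /bump sigmaE.
move: H; rewrite -val_eqE /=; (do ?case: ifP => ?); lia.
Qed.

Lemma delta_sigma_miss m l (j : 'I_l.+2) (s : dmap m l.+1) :
  (forall i, dfun s i != j) -> dcomp (delta j) (dcomp (sigma j) s) = s.
Proof.
move=> H; apply: dmap_eq => i; rewrite !dcompE deltaE; exact: lift_sigma.
Qed.

Lemma delta_inj m l (j : 'I_l.+2) (u v : dmap m l) :
  dcomp (delta j) u = dcomp (delta j) v -> u = v.
Proof.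
move=> H; apply: dmap_eq => i.
have := f_equal (fun s => dfun s i) H; rewrite !dcompE !deltaE; exact: lift_inj.
Qed.

Lemma dcompA k l m n (h : dmap m n) (g : dmap l m) (f : dmap k l) :
  dcomp h (dcomp g f) = dcomp (dcomp h g) f.
Proof. by apply: dmap_eq => i; rewrite !dcompE. Qed.

Lemma dcomp1 m n (f : dmap m n) : dcomp f (did m) = f.
Proof. by apply: dmap_eq => i; rewrite !dcompE didE. Qed.

Lemma dcomp1l m n (f : dmap m n) : dcomp (did n) f = f.
Proof. by apply: dmap_eq => i; rewrite !dcompE didE. Qed.

Lemma degen_fact N l (u : dmap l.+1 N) (b : 'I_l.+2) :
  0 < b -> dfun u (inord b.-1) = dfun u b -> u = dcomp (dcomp u (delta b)) (sigma b).
Proof.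
move=> Hb Hu; apply: dmap_eq => i; rewrite !dcompE deltaE.
have [->|Hib] := eqVneq i b.
  rewrite -Hu; congr (dfun u _); apply: ord_inj.
  rewrite /= /bump sigmaE ltnn inordK; last by have := ltn_ord b; lia.
  (do ?case: ifP => ?); lia.
by rewrite lift_sigma.
Qed.

Lemma pigeon N l (u : dmap l N) : N < l ->
  exists b : 'I_l.+1, 0 < b /\ dfun u (inord b.-1) = dfun u b.
Proof.
move=> HN.
have [E|E] := boolP [exists b : 'I_l.+1, (0 < b) && (dfun u (inord b.-1) == dfun u b)].
  by case/existsP: E => b /andP [H1 /eqP H2]; exists b.
exfalso; move: E; rewrite negb_exists => /forallP H.
have key : forall i, i <= l -> i <= dfun u (inord i).
  elim=> [|i IH] Hi //.
  have Hb := H (inord i.+1).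
  rewrite inordK // /= in Hb.
  have Hle : dfun u (inord i) <= dfun u (inord i.+1).
    by apply: dmono; rewrite !inordK //; lia.
  have Hne : (dfun u (inord i) : nat) != dfun u (inord i.+1).
    by move: Hb; rewrite val_eqE.
  have := IH (ltnW Hi); move: Hle Hne; lia.
have := key l (leqnn l); have := ltn_ord (dfun u (inord l)); lia.
Qed.


Definition Tgen N (A : 'I_N.+1 -> bool) m (s : dmap m N) : bool :=
  [exists j, A j && [forall i, dfun s i != j]].

Lemma Tgen_comp N (A : 'I_N.+1 -> bool) l m (s : dmap m N) (t : dmap l m) :
  Tgen A s -> Tgen A (dcomp s t).
Proof.
case/existsP => j /andP [Hj /forallP H]; apply/existsP; exists j.
by rewrite Hj /=; apply/forallP => i; rewrite dcompE.
Qed.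

Lemma Tgen_delta n (A : 'I_n.+2 -> bool) l (j : 'I_n.+2) (u : dmap l n) :
  A j -> Tgen A (dcomp (delta j) u).
Proof.
move=> Hj; apply/existsP; exists j; rewrite Hj /=.
by apply/forallP => i; rewrite dcompE deltaE eq_sym neq_lift.
Qed.

Section Gen.
Variables (C : Cat) (X : SObj C) (n : nat) (A : 'I_n.+2 -> bool).

Local Notation T := (@Tgen n.+1 A).

Definition GJo : finType := {m : 'I_n.+1 & {s : dmap m n.+1 | T s}}.
Definition GJh (i j : GJo) : finType :=
  {t : dmap (projT1 j) (projT1 i) | dcomp (sval (projT2 i)) t == sval (projT2 j)}.

Lemma GJcomp_proof (i j k : GJo) (v : GJh j k) (u : GJh i j) :
  dcomp (sval (projT2 i)) (dcomp (sval u) (sval v)) == sval (projT2 k).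
Proof.
case: u => u Hu; case: v => v Hv /=.
by rewrite dcompA (eqP Hu) (eqP Hv).
Qed.

Definition GJcomp (i j k : GJo) (v : GJh j k) (u : GJh i j) : GJh i k :=
  exist _ (dcomp (sval u) (sval v)) (GJcomp_proof v u).

Lemma GJid_proof (i : GJo) : dcomp (sval (projT2 i)) (did (projT1 i)) == sval (projT2 i).
Proof. by rewrite dcomp1. Qed.

Definition GJid (i : GJo) : GJh i i := exist _ (did _) (GJid_proof i).

Lemma GJassoc i j k l (w : GJh k l) (v : GJh j k) (u : GJh i j) :
  GJcomp w (GJcomp v u) = GJcomp (GJcomp w v) u.
Proof. apply: val_inj => /=; by rewrite dcompA. Qed.

Lemma GJidl i j (u : GJh i j) : GJcomp (GJid j) u = u.
Proof. apply: val_inj => /=; by rewrite dcomp1. Qed.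

Lemma GJidr i j (u : GJh i j) : GJcomp u (GJid i) = u.
Proof. apply: val_inj => /=; by rewrite dcomp1l. Qed.

Definition GJ : FinCat := Build_FinCat GJassoc GJidl GJidr.

Definition GDob (i : Jo GJ) : C := X (projT1 i).
Definition GDhom (i j : Jo GJ) (u : Jh i j) : Hom (GDob i) (GDob j) := sact X (sval u).

Lemma GDhom_id i : GDhom (jid i) = idm (GDob i).
Proof. exact: sact_id. Qed.

Lemma GDhom_comp i j k (v : Jh j k) (u : Jh i j) :
  GDhom (jcomp v u) = comp (GDhom v) (GDhom u).
Proof. exact: sact_comp. Qed.

Definition GD : Diagram C GJ := Build_Diagram GDhom_id GDhom_comp.


Lemma Tdelta (j : 'I_n.+2) : A j -> T (delta j).
Proof.
move=> Hj; apply/existsP; exists j; rewrite Hj /=.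
by apply/forallP => i; rewrite deltaE eq_sym neq_lift.
Qed.

Definition dj (j : 'I_n.+2) (Hj : A j) : GJo :=
  existT _ (ord_max : 'I_n.+1) (exist (fun s : dmap n n.+1 => T s) (delta j) (Tdelta Hj)).

Definition sel m (s : dmap m n.+1) : 'I_n.+2 :=
  odflt ord0 [pick j | A j && [forall i, dfun s i != j]].

Lemma sel_spec m (s : dmap m n.+1) : T s -> A (sel s) && [forall i, dfun s i != sel s].
Proof.
rewrite /sel; case: pickP => [j Hj|H] //=.
by case/existsP => j Hj; rewrite H in Hj.
Qed.

Lemma selA m (s : dmap m n.+1) : T s -> A (sel s).
Proof. by move/sel_spec/andP => []. Qed.

Lemma selM m (s : dmap m n.+1) : T s -> forall i, dfun s i != sel s.
Proof. by move/sel_spec/andP => [_ /forallP]. Qed.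

Variables (L : C) (p : forall i : Jo GJ, Hom L (dob GD i)) (Hlim : is_limit GD L p).

Definition Gphi (Z : C) (c : Hom Z L) : sfamily X T Z :=
  fun m s H => comp (sact X (dcomp (sigma (sel s)) s)) (comp (p (dj (selA H))) c).

Lemma cone_direct l (Hl : l < n.+1) (u v : dmap l n) j j' (Hj : A j) (Hj' : A j') :
  dcomp (delta j) u = dcomp (delta j') v ->
  comp (sact X u) (p (dj Hj)) = comp (sact X v) (p (dj Hj')).
Proof.
move=> E.
pose w : GJo := existT _ (Ordinal Hl)
   (exist (fun s : dmap l n.+1 => T s) (dcomp (delta j) u) (Tgen_delta u Hj)).
have Hu : dcomp (sval (projT2 (dj Hj))) u == sval (projT2 w) by [].
have Hv : dcomp (sval (projT2 (dj Hj'))) v == sval (projT2 w) by rewrite /= E.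
have := (proj1 Hlim) (dj Hj) w (exist _ u Hu).
have := (proj1 Hlim) (dj Hj') w (exist _ v Hv).
rewrite /= /GDhom /= => -> -> //.
Qed.

Lemma coneK d : forall l, l <= d + n -> forall (u v : dmap l n) j j' (Hj : A j) (Hj' : A j'),
  dcomp (delta j) u = dcomp (delta j') v ->
  comp (sact X u) (p (dj Hj)) = comp (sact X v) (p (dj Hj')).
Proof.
elim: d => [|d IH] l Hl u v j j' Hj Hj' E.
  have Hl2 : l < n.+1 by move: Hl; rewrite add0n ltnS.
  exact: (cone_direct Hl2).
have [Hl'|Hl'] := leqP l (d + n); first exact: IH.
case: l Hl Hl' u v E => [|l] Hl Hl' u v E; first by lia.
have Hnl : n < l.+1 by lia.
have [b [Hb Hub]] := pigeon u Hnl.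
have Hvb : dfun v (inord b.-1) = dfun v b.
  have := f_equal (fun s => dfun s (inord b.-1)) E.
  have := f_equal (fun s => dfun s b) E.
  rewrite !dcompE !deltaE Hub => -> /lift_inj. done.
rewrite (degen_fact Hb Hub) (degen_fact Hb Hvb).
have E2 : dcomp (delta j) (dcomp u (delta b)) = dcomp (delta j') (dcomp v (delta b)).
  by rewrite !dcompA E.
rewrite [sact X (dcomp (dcomp u _) _)]sact_comp [sact X (dcomp (dcomp v _) _)]sact_comp.
rewrite -!comp_assoc.
congr (comp _ _); apply: IH => //; lia.
Qed.

Lemma coneKK l (u v : dmap l n) j j' (Hj : A j) (Hj' : A j') :
  dcomp (delta j) u = dcomp (delta j') v ->
  comp (sact X u) (p (dj Hj)) = comp (sact X v) (p (dj Hj')).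
Proof. by apply: (@coneK l); lia. Qed.


Lemma sfam_irr Z (a : sfamily X T Z) m (s s' : dmap m n.+1) (E : s = s') H H' :
  a m s H = a m s' H'.
Proof. by subst s'; rewrite (bool_irrelevance H H'). Qed.

Lemma delta_sigma_sel m (s : dmap m n.+1) (H : T s) :
  dcomp (delta (sel s)) (dcomp (sigma (sel s)) s) = s.
Proof. exact: delta_sigma_miss (selM H). Qed.

Lemma Gphi_proj Z (c : Hom Z L) (i : GJo) :
  comp (p i) c = Gphi c (valP (projT2 i)).
Proof.
rewrite /Gphi comp_assoc; congr (comp _ c).
set s := sval (projT2 i); set Hs := valP (projT2 i).
have Hu : dcomp (delta (sel s)) (dcomp (sigma (sel s)) s) == s.
  by rewrite delta_sigma_sel.
pose u : GJh (dj (selA Hs)) i :=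
  exist (fun t : dmap (projT1 i) n => dcomp (delta (sel s)) t == s) _ Hu.
have := (proj1 Hlim) _ _ u; rewrite /= /GDhom /= => E.
by rewrite -E.
Qed.

Lemma Gphi_isMap : is_Map X T L Gphi.
Proof.
split.
- move=> Z c l m t s Hs Hst; rewrite /Gphi.
  rewrite [RHS]comp_assoc -sact_comp !comp_assoc; congr (comp _ c).
  apply: coneKK.
  by rewrite (delta_sigma_sel Hst) dcompA (delta_sigma_sel Hs).
- by move=> Z Z' g c m s H; rewrite /Gphi !comp_assoc.
- move=> Z a Ha.
  pose q (i : Jo GJ) : Hom Z (dob GD i) := a _ (sval (projT2 i)) (valP (projT2 i)).
  have Hq : forall i j (u : Jh i j), comp (dhom GD u) (q i) = q j.
    move=> [m [s Hs]] [l [s' Hs']] [t Ht] /=.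
    change (dmap l m) in t.
    have E : dcomp s t = s' by exact: (eqP Ht).
    rewrite /q /= /GDhom /=.
    clear Ht; move: Hs'; rewrite -E => Hs'.
    by apply: esym; apply: Ha.
  have [h [Hh _]] := (proj2 Hlim) Z q Hq.
  exists h => m s H.
  rewrite /Gphi (Hh (dj (selA H))) /q /=.
  transitivity (a m (dcomp (delta (sel s)) (dcomp (sigma (sel s)) s))
     (Tgen_comp (dcomp (sigma (sel s)) s) (Tdelta (selA H)))).
    by apply: esym; apply: Ha.
  apply: (sfam_irr a (delta_sigma_sel H)).
- move=> Z c c' E.
  pose q (i : Jo GJ) : Hom Z (dob GD i) := comp (p i) c.
  have Hq : forall i j (u : Jh i j), comp (dhom GD u) (q i) = q j.
    by move=> i j u; rewrite /q comp_assoc (proj1 Hlim).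
  have [h [_ Hh]] := (proj2 Hlim) Z q Hq.
  rewrite (Hh c) // (Hh c') // => i.
  by rewrite /q !Gphi_proj E.
Qed.

End Gen.

Lemma Map_exists (C : Cat) (HL : has_finite_limits C) (X : SObj C) n (A : 'I_n.+2 -> bool) :
  exists M phi, is_Map X (@Tgen n.+1 A) M phi.
Proof.
have [L [p Hlim]] := HL _ (GD X A).
by exists L, (Gphi p); exact: Gphi_isMap.
Qed.


Lemma canon_exists (C : Cat) (X : SObj C) N (T : forall m, dmap m N -> bool) M phi :
  is_Map X T M phi -> exists c : Hom (X N) M, canon_Map phi c.
Proof.
case=> _ _ Hex _.
have [c Hc] := Hex (X N) (fun m s _ => sact X s) (fun l m t s _ _ => sact_comp X s t).
by exists c.
Qed.

Section PB.
Variables (C : Cat) (A B C0 : C) (f : Hom A C0) (g : Hom B C0).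

Definition dobn (i : nat) : C := match i with 0 => A | 1 => B | _ => C0 end.

Definition arr (i j : nat) : (i == j) || (j == 2) -> Hom (dobn i) (dobn j).
Proof.
case: i => [|[|i]]; case: j => [|[|j]] /= H.
- exact: idm.
- exact: (False_rect _ (Bool.diff_false_true H)).
- exact: f.
- exact: (False_rect _ (Bool.diff_false_true H)).
- exact: idm.
- exact: g.
- exact: (False_rect _ (Bool.diff_false_true H)).
- exact: (False_rect _ (Bool.diff_false_true H)).
- exact: idm.
Defined.

Definition PJh (i j : 'I_3) : finType := {x : unit | (i == j :> nat) || (j == 2 :> nat)}.

Lemma PJcomp_proof (i j k : 'I_3) (v : PJh j k) (u : PJh i j) :
  (i == k :> nat) || (k == 2 :> nat).
Proof.
case: u => _ /= Hu; case: v => _ /= Hv.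
move: Hu Hv; case: i j k => [[|[|[|i]]] Hi] [[|[|[|j]]] Hj] [[|[|[|k]]] Hk] //=.
Qed.

Definition PJcomp (i j k : 'I_3) (v : PJh j k) (u : PJh i j) : PJh i k :=
  exist _ tt (PJcomp_proof v u).

Lemma PJid_proof (i : 'I_3) : (i == i :> nat) || (i == 2 :> nat).
Proof. by rewrite eqxx. Qed.

Definition PJid (i : 'I_3) : PJh i i := exist _ tt (PJid_proof i).

Lemma PJh_eq (i j : 'I_3) (u v : PJh i j) : u = v.
Proof. by apply: val_inj; case: (val u); case: (val v). Qed.

Definition PJ : FinCat :=
  @Build_FinCat (ordinal 3) PJh PJcomp PJid
    (fun _ _ _ _ _ _ _ => PJh_eq _ _) (fun _ _ _ => PJh_eq _ _) (fun _ _ _ => PJh_eq _ _).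

Definition PDob (i : Jo PJ) : C := dobn i.
Definition PDhom (i j : Jo PJ) (u : Jh i j) : Hom (PDob i) (PDob j) := arr (valP u).

Lemma PDhom_id i : PDhom (jid i) = idm (PDob i).
Proof. case: i => [[|[|[|i]]] Hi] //. Qed.

Lemma PDhom_comp i j k (v : Jh j k) (u : Jh i j) :
  PDhom (jcomp v u) = comp (PDhom v) (PDhom u).
Proof.
rewrite /PDhom; move: (valP (jcomp v u)) (valP v) (valP u).
case: i j k {u v} => [[|[|[|i]]] Hi] [[|[|[|j]]] Hj] [[|[|[|k]]] Hk] //= *;
  by rewrite ?comp_idl ?comp_idr.
Qed.

Definition PD : Diagram C PJ := Build_Diagram PDhom_id PDhom_comp.

End PB.

Lemma pullback_exists (C : Cat) (HL : has_finite_limits C) (A B C0 : C)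
  (f : Hom A C0) (g : Hom B C0) : exists P (p1 : Hom P A) (p2 : Hom P B), is_pullback f g p1 p2.
Proof.
have [L [p [Hc Hlu]]] := HL _ (PD f g).
set i0 : 'I_3 := Ordinal (isT : 0 < 3).
set i1 : 'I_3 := Ordinal (isT : 1 < 3).
set i2 : 'I_3 := Ordinal (isT : 2 < 3).
have e02 : PJh i0 i2 := exist _ tt isT.
have e12 : PJh i1 i2 := exist _ tt isT.
exists L, (p i0), (p i1); split.
  by rewrite (Hc _ _ e02) (Hc _ _ e12).
move=> Z q1 q2 Hq.
pose qn (i : nat) : Hom Z (dobn A B C0 i) :=
  match i with 0 => q1 | 1 => q2 | _ => comp f q1 end.
pose q (i : Jo PJ) : Hom Z (dob (PD f g) i) := qn i.
have Hqc : forall i j (u : @Jh PJ i j), comp (dhom (PD f g) u) (q i) = q j.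
  move=> i j [[] Hu]; rewrite /= /PDhom /=; move: Hu.
  case: i j => [[|[|[|i]]] Hi] [[|[|[|j]]] Hj] //= *; by rewrite ?comp_idl.
have [h [Hh Huniq]] := Hlu Z q Hqc.
exists h; split; first by split; [exact: (Hh i0) | exact: (Hh i1)].
move=> h' H1 H2; apply: Huniq => -[[|[|[|i]]] Hi] //.
- by have -> : Ordinal Hi = i0 by apply: ord_inj.
- by have -> : Ordinal Hi = i1 by apply: ord_inj.
- have -> : Ordinal Hi = i2 by apply: ord_inj.
  by rewrite -(Hc _ _ e02) -comp_assoc H1.
Qed.


Lemma MapRel_exists (V : Cat) (HL : has_finite_limits V) (X Y : SObj V) (f : SMor X Y)
  N (T : forall m, dmap m N -> bool) MX phiX MY phiY :
  is_Map X T MX phiX -> is_Map Y T MY phiY ->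
  exists M phi psi, is_MapRel f T M phi psi.
Proof.
move=> HX HY.
have [cX nX eX uX] := HX; have [cY nY eY uY] := HY.
have [F HF] : exists F : Hom MX MY, forall m s H,
    phiY MX F m s H = comp (f m) (phiX MX (idm MX) m s H).
  apply: eY => l m t s Hs Hst.
  rewrite (cX _ (idm MX) l m t s Hs Hst) comp_assoc (smor_nat f) -comp_assoc //.
have PF : forall Z (d : Hom Z MX) m s H,
    phiY Z (comp F d) m s H = comp (f m) (phiX Z d m s H).
  move=> Z d m s H; rewrite nY HF -comp_assoc -nX comp_idl //.
have [R HR] := canon_exists HY.
have PR : forall Z (y : Hom Z (Y N)) m s H, phiY Z (comp R y) m s H = comp (sact Y s) y.
  by move=> Z y m s H; rewrite nY HR.
have [P [p1 [p2 [Hsq Hpb]]]] := pullback_exists HL F R.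
exists P, (fun Z c => phiX Z (comp p1 c)), (fun Z c => comp p2 c); split.
- by move=> Z c; apply: cX.
- move=> Z c m s H; rewrite -PF -PR !comp_assoc Hsq //.
- move=> Z Z' g c; split; last by rewrite comp_assoc.
  by move=> m s H; rewrite -nX comp_assoc.
- move=> Z a y Ha Hy.
  have [d Hd] := eX Z a Ha.
  have Hdy : comp F d = comp R y.
    by apply: uY => m s H; rewrite PF PR Hd Hy.
  have [h [[H1 H2] _]] := Hpb Z d y Hdy.
  exists h; split => //.
  by move=> m s H; rewrite H1 Hd.
- move=> Z c c' E1 E2.
  have Hp1 : comp p1 c = comp p1 c' by apply: uX.
  have Hsq' : comp F (comp p1 c) = comp R (comp p2 c) by rewrite !comp_assoc Hsq.
  have [h [_ Hu]] := Hpb Z _ _ Hsq'.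
  by rewrite (Hu c) // (Hu c') // Hp1.
Qed.


Lemma Tgen_bdry N (A : 'I_N.+1 -> bool) m (s : dmap m N) : Tgen A s -> boundary s.
Proof. by case/existsP => j /andP [_ H]; apply/existsP; exists j. Qed.

Lemma sig_max_delta n :
  dcomp (sigma (ord_max : 'I_n.+2)) (delta (inord n : 'I_n.+2)) = did n.
Proof.
apply: dmap_eq => i; apply: ord_inj; rewrite dcompE didE sigmaE deltaE /= /bump inordK //.
have := ltn_ord i; (do ?case: ifP => ?); lia.
Qed.

Lemma sig_max_delta_max n :
  dcomp (sigma (ord_max : 'I_n.+2)) (delta (ord_max : 'I_n.+2)) = did n.
Proof. exact: sigma_delta. Qed.

Lemma delta_miss n (j : 'I_n.+2) i : dfun (delta j) i != j.
Proof. by rewrite deltaE eq_sym neq_lift. Qed.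

Lemma L1 n m (s : dmap m n.+1) (j : 'I_n.+2) :
  (forall i, dfun s i != inord n) -> j != inord n -> (forall i, dfun s i != j) ->
  boundary (dcomp (sigma (ord_max : 'I_n.+2)) s).
Proof.
move=> Hn Hj Hs.
have Hjv : (j : nat) != n by move: Hj; rewrite -val_eqE /= inordK.
have Hsn : forall i, (dfun s i : nat) != n.
  by move=> i; move: (Hn i); rewrite -val_eqE /= inordK.
have Hsj : forall i, (dfun s i : nat) != j by move=> i; move: (Hs i); rewrite -val_eqE.
apply/existsP.
have Hjlt := ltn_ord j.
case: (eqVneq (j : nat) n.+1) => Hjn.
  exists ord_max; apply/forallP => i; rewrite dcompE -val_eqE /= sigmaE (_ : nat_of_ord (ord_max : 'I_n.+2) = n.+1) //.
  have := Hsn i; have := Hsj i; have := ltn_ord (dfun s i); rewrite Hjn.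
  (do ?case: ifP => ?); lia.
exists (inord j); apply/forallP => i; rewrite dcompE -val_eqE /= sigmaE inordK; last by lia.
rewrite (_ : nat_of_ord (ord_max : 'I_n.+2) = n.+1) //.
have := Hsn i; have := Hsj i; have := ltn_ord (dfun s i).
move: Hjn Hjv; (do ?case: ifP => ?); lia.
Qed.

Lemma cover_epi (V : DescentCat) (Hsub : subcanonical V) (P Q : V) (c : Hom P Q) :
  cover c -> forall W (a1 a2 : Hom Q W), comp a1 c = comp a2 c -> a1 = a2.
Proof.
move=> Hc W a1 a2 E.
have [K [p1 [p2 Hpb]]] := pullback_exists (@dc_finite_limits V) c c.
have Hh : comp (comp a1 c) p1 = comp (comp a1 c) p2.
  by rewrite -!comp_assoc (proj1 Hpb).
have [u [_ Hu]] := Hsub _ _ c Hc _ _ _ Hpb _ _ Hh.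
by rewrite (Hu a1) // (Hu a2).
Qed.

Lemma iso_of_mono_cover (V : DescentCat) (Hsub : subcanonical V) (P Q : V) (c : Hom P Q) :
  cover c -> (forall Z (g h : Hom Z P), comp c g = comp c h -> g = h) -> is_iso c.
Proof.
move=> Hc Hm.
have Hpb : is_pullback c c (idm P) (idm P).
  split => // Z q1 q2 E; have Eq := Hm _ _ _ E; subst q2.
  exists q1; split; first by rewrite comp_idl.
  by move=> h' H1 _; rewrite -H1 comp_idl.
have [u [Hu1 _]] := Hsub _ _ c Hc _ _ _ Hpb _ (idm P) erefl.
have [u0 [_ Hu0]] := Hsub _ _ c Hc _ _ _ Hpb _ c erefl.
exists u; split => //.
rewrite (Hu0 (comp c u)); last by rewrite -comp_assoc Hu1 comp_idr.
by rewrite (Hu0 (idm Q)) // comp_idl.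
Qed.

Lemma mono_gt (V : DescentCat) k (X : SObj V) n :
  is_kgroupoid k X -> k < n.+1 -> forall Z (g h : Hom Z (X n.+1)),
  (forall m (s : dmap m n.+1), boundary s -> comp (sact X s) g = comp (sact X s) h) ->
  g = h.
Proof.
move=> HX Hk Z g h MG.
have [MH [phiH HMH]] := Map_exists (@dc_finite_limits V) X (fun j : 'I_n.+2 => j != ord0).
have [cH HcH] := canon_exists HMH.
have [_ Hiso] := HX n.+1 ord0 isT MH phiH HMH cH HcH.
have [inv [Hinv _]] := Hiso Hk.
have E : comp cH g = comp cH h.
  case: HMH => _ nat _ uniq.
  apply: uniq => m s H; rewrite !nat !HcH; apply: MG; exact: Tgen_bdry H.
by rewrite -[g]comp_idl -Hinv -comp_assoc E comp_assoc Hinv comp_idl.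
Qed.

Lemma mono_eq (V : DescentCat) (Hsub : subcanonical V) (X Y : SObj V) (f : SMor X Y) n :
  is_kgroupoid n X -> is_hypercover f -> forall Z (g h : Hom Z (X n)),
  (forall m (s : dmap m n), boundary s -> comp (sact X s) g = comp (sact X s) h) ->
  comp (f n) g = comp (f n) h -> g = h.
Proof.
move=> HX Hhyp Z g h MG Hf.
set i0 : 'I_n.+2 := inord n.
set sg : dmap n.+1 n := sigma ord_max.
have HL := @dc_finite_limits V.
have [MH [phiH HMH]] := Map_exists HL X (fun j : 'I_n.+2 => j != i0).
have [cH HcH] := canon_exists HMH.
have [_ Hiso] := HX n.+1 i0 isT MH phiH HMH cH HcH.
have [inv [Hinv _]] := Hiso (ltnSn n).
have [MbX [phibX HbX]] := Map_exists HL X (fun _ : 'I_n.+2 => true).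
have [MbY [phibY HbY]] := Map_exists HL Y (fun _ : 'I_n.+2 => true).
have [R [phiR [psiR HR]]] := MapRel_exists HL f HbX HbY.
have [cR HcR] : exists cR, canon_MapRel f phiR psiR cR.
  case: HR => _ _ _ Hex _.
  have [cR [H1 H2]] := Hex (X n.+1) (fun m s _ => sact X s) (f n.+1)
     (fun l m t s _ _ => sact_comp X s t) (fun m s _ => smor_nat f s).
  by exists cR.
have HcovR : cover cR := Hhyp n.+1 R phiR psiR HR cR HcR.
have [cR1 cR2 cR3 cR4 cR5] := HR.
have [r Hr] : exists r : Hom R MH, forall m s H,
    phiH R r m s H = phiR R (idm R) m s (Tgen_bdry H).
  case: HMH => _ _ Hex _; apply: Hex => l m t s Hs Hst; exact: cR1.
have HrcR : comp r cR = cH.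
  case: HMH => _ nH _ uH; apply: uH => m s H.
  by rewrite nH Hr -(proj1 (cR3 _ _ cR (idm R))) comp_idl (proj1 HcR) HcH.
have Hd : @Tgen n.+1 (fun _ => true) n (delta i0).
  by apply/existsP; exists i0; apply/forallP => i; exact: delta_miss.
have Hfaces : phiR R (idm R) n (delta i0) Hd = comp (sact X (delta i0)) (comp inv r).
  apply: (cover_epi Hsub HcovR).
  rewrite -(proj1 (cR3 _ _ cR (idm R))) comp_idl (proj1 HcR).
  by rewrite -!comp_assoc HrcR Hinv comp_idr.
pose a : sfamily X (@Tgen n.+1 (fun _ => true)) Z := fun m s _ =>
  if [forall i, dfun s i != i0] then comp (sact X (dcomp sg s)) h
  else comp (sact X (dcomp sg s)) g.
pose y := comp (sact Y sg) (comp (f n) g).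
have Ha : scompatible a.
  move=> l m t s Hs Hst; rewrite /a.
  case: (boolP [forall i, dfun s i != i0]) => Hs0.
    have -> : [forall i, dfun (dcomp s t) i != i0].
      by apply/forallP => i; rewrite dcompE (forallP Hs0).
    by rewrite comp_assoc -sact_comp dcompA.
  case: (boolP [forall i, dfun (dcomp s t) i != i0]) => Hst0;
    last by rewrite comp_assoc -sact_comp dcompA.
  rewrite comp_assoc -sact_comp -dcompA; apply: esym; apply: MG.
  case/existsP: Hs => j /andP [_ /forallP Hj].
  apply: (L1 (j := j)).
  - by move=> i; exact: (forallP Hst0).
  - apply/negP => /eqP Ej; move: Hs0; rewrite negb_forall => /existsP [i].
    rewrite negbK => /eqP Ei; by move: (Hj i); rewrite Ei Ej /i0 eqxx.
  - by move=> i; rewrite dcompE.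
have Hy : forall m s H, comp (f m) (a m s H) = comp (sact Y s) y.
  move=> m s H; rewrite /a /y [RHS]comp_assoc -sact_comp.
  by case: ifP => _; rewrite comp_assoc (smor_nat f) -comp_assoc ?Hf.
have [pt [Hpt1 Hpt2]] := cR4 Z a y Ha Hy.
have Hrpt : comp r pt = comp cH (comp (sact X sg) g).
  case: HMH => _ nH _ uH; apply: uH => m s H.
  rewrite !nH Hr HcH -(proj1 (cR3 _ _ pt (idm R))) comp_idl Hpt1 /a comp_assoc -sact_comp.
  case: ifP => // /forallP Hmiss; apply: esym; apply: MG.
  case/existsP: H => j /andP [Hj /forallP Hsj].
  exact: (L1 (j := j)).
have E1 : comp (phiR R (idm R) n (delta i0) Hd) pt = h.
  rewrite -(proj1 (cR3 _ _ pt (idm R))) comp_idl Hpt1 /a.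
  have -> : [forall i, dfun (delta i0) i != i0] by apply/forallP => i; exact: delta_miss.
  by rewrite sig_max_delta sact_id comp_idl.
have E2 : comp (comp (sact X (delta i0)) (comp inv r)) pt = g.
  rewrite -!comp_assoc Hrpt (comp_assoc inv) Hinv comp_idl comp_assoc -sact_comp.
  by rewrite /sg sig_max_delta sact_id comp_idl.
by rewrite -E1 Hfaces E2.
Qed.


Theorem lemma3p13 (V : DescentCat) (Hsub : subcanonical V) (k : nat)
  (X Y : SObj V) (f : SMor X Y) :
  is_kgroupoid k X -> is_kgroupoid k Y -> is_hypercover f ->
  forall n, k <= n ->
  forall (M : V) (phi : forall Z : V, Hom Z M -> sfamily X (boundary (n:=n)) Z)
    (psi : forall Z : V, Hom Z M -> Hom Z (Y n)),
    is_MapRel f (boundary (n:=n)) M phi psi ->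
    forall c : Hom (X n) M, canon_MapRel f phi psi c -> is_iso c.
Proof.
move=> HX HY Hhyp n Hkn M phi psi HM c Hc.
apply: (iso_of_mono_cover Hsub (Hhyp n M phi psi HM c Hc)).
move=> Z g h E.
case: HM => _ _ Hnat _ _.
have MG : forall m (s : dmap m n), boundary s -> comp (sact X s) g = comp (sact X s) h.
  move=> m s H.
  by rewrite -!(proj1 Hc m s H) -!(proj1 (Hnat _ _ _ c) m s H) E.
have Hf : comp (f n) g = comp (f n) h.
  by rewrite -(proj2 Hc) -!(proj2 (Hnat _ _ _ c)) E.
move: Hkn; rewrite leq_eqVlt => /orP [/eqP Ekn | Hlt].
  subst k; exact: (mono_eq Hsub HX Hhyp MG Hf).
clear -HX Hlt MG.
case: n g h MG Hlt => [|n] g h MG Hlt //.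
exact: (mono_gt HX Hlt MG).
Qed.
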